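(* (Quotient rule.) Let $n\in\mathbb{N}$ (with $0\in\mathbb{N}$) and let $u$ and $v$ be $n$ times differentiable functions of $x$. At every point where $v\neq 0$, \[ \frac{d^n}{dx^n}\left(\frac{u}{v}\right)=n!\sum_{\ell=0}^{n}\frac{u^{(n-\ell)}}{(n-\ell)!}\sum_{\sum_i i y_{k,i}=\ell}\binom{\sum_i y_{k,i}}{y_{k,1},\ldots,y_{k,\ell}}\frac{(-1)^{\sum_i y_{k,i}}}{v^{\sum_i y_{k,i}+1}}\prod_{i=1}^{\ell}\left[\frac{v^{(i)}}{i!}\right]^{y_{k,i}}. \]
   Context: For each $\ell$, the inner sum runs over all partitions of $\ell$, each represented as a tuple $(y_{k,1},\ldots,y_{k,\ell})$ of non-negative integers with $\sum_{i=1}^{\ell} i\,y_{k,i}=\ell$; sums $\sum_i$ run over $i=1,\ldots,\ell$. For $\ell=0$ the only partition is the zero partition and the inner sum equals $1/v$. $f^{(i)}$ denotes the $i$-th derivative with respect to $x$, and $\binom{N}{a_1,\ldots,a_m}=\frac{N!}{a_1!\cdots a_m!}$ is the multinomial coefficient. *)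

(* Defs.v *)
From mathcomp Require Import all_boot all_order all_algebra.
From mathcomp Require Import all_classical all_reals all_analysis.
Set Implicit Arguments. Unset Strict Implicit. Unset Printing Implicit Defensive.
Import Order.TTheory GRing.Theory Num.Theory.
Local Open Scope ring_scope.

(* Partitions of l, encoded as tuples (y_1,...,y_l) (y_(i+1) stored at index i : 'I_l)
   of naturals with sum_i i * y_i = l.  Each y_i <= l, so values in 'I_l.+1 lose nothing. *)
Definition partitions_of (l : nat) : {set {ffun 'I_l -> 'I_l.+1}} :=
  [set y : {ffun 'I_l -> 'I_l.+1} | (\sum_(i < l) i.+1 * y i)%N == l].

Definition multinom (R : fieldType) (N m : nat) (a : 'I_m -> nat) : R :=
  (N`!)%:R / (\prod_(i < m) (a i)`!)%:R.

(* Main.v *)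
Require Import Defs.
From mathcomp Require Import all_boot all_order all_algebra.
From mathcomp Require Import all_classical all_reals all_analysis.
Import Order.TTheory GRing.Theory Num.Theory.
Local Open Scope ring_scope.
From mathcomp Require Import ring zify.
Import numFieldNormedType.Exports.

Set Implicit Arguments. Unset Strict Implicit. Unset Printing Implicit Defensive.

Definition ffcons (T : Type) m (t : T) (y : {ffun 'I_m -> T}) : {ffun 'I_m.+1 -> T} :=
  [ffun i : 'I_m.+1 => if unlift ord0 i is Some j then y j else t].

Lemma ffcons0 (T : Type) m (t : T) (y : {ffun 'I_m -> T}) : ffcons t y ord0 = t.
Proof. by rewrite ffunE unlift_none. Qed.

Lemma ffconsS (T : Type) m (t : T) (y : {ffun 'I_m -> T}) j : ffcons t y (lift ord0 j) = y j.
Proof. by rewrite ffunE liftK. Qed.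

Lemma big_ffunS (V : nmodType) (T : finType) m (F : {ffun 'I_m.+1 -> T} -> V) :
  \sum_(y : {ffun 'I_m.+1 -> T}) F y =
  \sum_(t : T) \sum_(y : {ffun 'I_m -> T}) F (ffcons t y).
Proof.
rewrite pair_big /=.
pose h (p : T * {ffun 'I_m -> T}) := ffcons p.1 p.2.
pose h' (y : {ffun 'I_m.+1 -> T}) := (y ord0, [ffun j => y (lift ord0 j)]).
rewrite (reindex h) /=; last first.
  exists h' => [[t y] _|y _].
    by rewrite /h /h' /= ffcons0; congr pair; apply/ffunP => j; rewrite ffunE ffconsS.
  rewrite /h /h' /=; apply/ffunP => i; rewrite ffunE.
  case: unliftP => [j ->|->] //; by rewrite ffunE.
by apply: eq_bigr.
Qed.

Lemma multinom_cons (R : numFieldType) B m K (t : 'I_B) (y : {ffun 'I_m -> 'I_B}) :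
  (t <= K)%N ->
  multinom R K (fun i => (ffcons t y i : nat)) =
  'C(K, t)%:R * multinom R (K - t) (fun i => (y i : nat)).
Proof.
move=> tK; rewrite /multinom big_ord_recl ffcons0.
under eq_bigr do rewrite ffconsS.
rewrite -(bin_fact tK) !natrM.
have h1 : (t`!)%:R != 0 :> R by rewrite pnatr_eq0 -lt0n fact_gt0.
have h2 : (\prod_(i < m) (y i)`!)%:R != 0 :> R.
  by rewrite pnatr_eq0 -lt0n prodn_gt0 // => i; rewrite fact_gt0.
field; by rewrite h1 h2.
Qed.

Lemma multinomial (R : numFieldType) B m K (z : 'I_m -> {poly R}) : (K < B)%N ->
  (\sum_(i < m) z i) ^+ K =
  \sum_(y : {ffun 'I_m -> 'I_B} | (\sum_(i < m) (y i : nat))%N == K)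
     multinom R K (fun i => (y i : nat)) *: \prod_(i < m) z i ^+ y i.
Proof.
elim: m z K => [|m IH] z K hK.
  rewrite big_ord0; case: K hK => [|K] hK.
    rewrite expr0 (big_pred1 [ffun=> Ordinal hK]); last first.
      move=> y; rewrite big_ord0 eqxx; symmetry; apply/eqP/ffunP => -[] //.
    by rewrite /multinom !big_ord0 /= divr1 scale1r.
  by rewrite expr0n /= big_pred0 // => y; rewrite big_ord0.
rewrite big_ord_recl addrC exprDn [RHS]big_mkcond [RHS]big_ffunS /=.
rewrite (big_ord_widen _ (fun i => (\sum_(i < m) z (lift ord0 i)) ^+ (K - i) * z ord0 ^+ i *+ 'C(K, i)) hK).
rewrite big_mkcond; apply: eq_bigr => t _.
case: ifP => tK.
  rewrite ltnS in tK.
  rewrite (IH _ (K - t)%N); last by apply: leq_ltn_trans hK; apply: leq_subr.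
  rewrite mulr_suml -sumrMnl big_mkcond; apply: eq_bigr => y _.
  rewrite big_ord_recl ffcons0.
  under [X in (_ + X)%N]eq_bigr do rewrite ffconsS.
  have -> : ((t + \sum_(i < m) (y i : nat)) == K)%N = ((\sum_(i < m) (y i : nat)) == K - t)%N.
    by apply/eqP/eqP => [<-|->]; [rewrite addKn|rewrite subnKC].
  case: ifP => _; last by [].
  rewrite multinom_cons // big_ord_recl ffcons0.
  under [X in _ *: (_ * X)]eq_bigr do rewrite ffconsS.
  rewrite -scalerAl -scaler_nat scalerA; congr (_ *: _); apply: mulrC.
rewrite big1 // => y _; rewrite big_ord_recl ffcons0.
case: eqP => // hs; move: tK; rewrite -hs ltnS leq_addr //.
Qed.

Definition Pp (R : numFieldType) (a : nat -> R) l : {poly R} :=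
  \sum_(i < l) a i.+1 *: 'X^(i.+1).

Lemma coefPK (R : numFieldType) (a : nat -> R) l K : (K <= l)%N ->
  (Pp a l ^+ K)`_l =
  \sum_(y in partitions_of l | (\sum_(i < l) (y i : nat))%N == K)
     multinom R K (fun i => (y i : nat)) * \prod_(i < l) a i.+1 ^+ y i.
Proof.
move=> hK; rewrite /Pp (multinomial _ (B:=l.+1)) // coef_sum.
rewrite big_mkcond [RHS]big_mkcond; apply: eq_bigr => y _.
rewrite inE andbC; case: ifP => _ //=.
under eq_bigr do rewrite exprZn -exprM.
rewrite scaler_prod prodrXr !coefZ coefXn.
by rewrite eq_sym; case: (_ == l); rewrite ?mulr1 ?mulr0.
Qed.

Definition csum (R : numFieldType) (a : nat -> R) (w : R) l : R :=
  \sum_(y in partitions_of l)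
     (multinom R (\sum_(i < l) (y i : nat))%N (fun i => (y i : nat)) *
      (-1) ^+ (\sum_(i < l) (y i : nat))%N
      / w ^+ (\sum_(i < l) (y i : nat)).+1 *
      \prod_(i < l) a i.+1 ^+ (y i : nat)).

Definition Gp (R : numFieldType) (a : nat -> R) (w : R) l : {poly R} :=
  \sum_(K < l.+1) ((-1) ^+ K / w ^+ K.+1) *: Pp a l ^+ K.

Lemma part_bound l (y : {ffun 'I_l -> 'I_l.+1}) : y \in partitions_of l ->
  (\sum_(i < l) (y i : nat) < l.+1)%N.
Proof.
rewrite inE ltnS => /eqP hl; rewrite [X in (_ <= X)%N](esym hl); apply: leq_sum => i _; exact: leq_pmull.
Qed.

Lemma csum_G (R : numFieldType) (a : nat -> R) w l :
  csum a w l = (Gp a w l)`_l.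
Proof.
rewrite /csum /Gp coef_sum.
under [RHS]eq_bigr => K _ do rewrite coefZ (@coefPK R a l K (ltn_ord K)) big_distrr big_mkcondr.
rewrite exchange_big /=; apply: eq_bigr => y yP.
rewrite -big_mkcond (big_pred1 (Ordinal (part_bound yP))); last first.
  by move=> K; rewrite /= -val_eqE /= eq_sym.
rewrite /=; ring.
Qed.


Lemma coef_pow_low (R : numFieldType) (p : {poly R}) K i :
  p`_0 = 0 -> (i < K)%N -> (p ^+ K)`_i = 0.
Proof.
move=> p0; elim: K i => [|K IH] i hi //.
rewrite exprS coefM big1 // => -[[|j] hj] _ /=; first by rewrite p0 mul0r.
rewrite IH ?mulr0 //; lia.
Qed.

Lemma coef_pow_eq (R : numFieldType) (p q : {poly R}) j :
  (forall k, (k <= j)%N -> p`_k = q`_k) ->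
  forall K i, (i <= j)%N -> (p ^+ K)`_i = (q ^+ K)`_i.
Proof.
move=> hpq; elim=> [|K IH] i hi; first by rewrite !expr0.
rewrite !exprS !coefM; apply: eq_bigr => k _.
have hk := ltn_ord k.
rewrite hpq ?IH //; lia.
Qed.

Lemma coefP (R : numFieldType) (a : nat -> R) N k :
  (Pp a N)`_k = if (0 < k <= N)%N then a k else 0.
Proof.
rewrite /Pp coef_sum.
under eq_bigr do rewrite coefZ coefXn.
case: k => [|k] /=; first by rewrite big1 // => i _; rewrite mulr0.
case: (ltnP k N) => hk.
  rewrite (bigD1 (Ordinal hk)) //= eqxx mulr1 big1 ?addr0 // => i hi.
  rewrite eqSS; case: eqP => [e|_]; last by rewrite mulr0.
  by move: hi; rewrite -val_eqE /= e eqxx.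
rewrite big1 // => i _; rewrite eqSS; case: eqP => [e|_]; last by rewrite mulr0.
by move: (ltn_ord i); rewrite -e ltnNge hk.
Qed.

Lemma sum_trunc (V : nmodType) m n (F : nat -> V) : (m <= n)%N ->
  (forall k, (m <= k)%N -> (k < n)%N -> F k = 0) ->
  \sum_(k < n) F k = \sum_(k < m) F k.
Proof.
move=> mn F0; rewrite (big_ord_widen n F mn) [RHS]big_mkcond; apply: eq_bigr => i _.
case: ifP => // h; rewrite F0 //; first by rewrite leqNgt h.
Qed.

Lemma Gp_stable (R : numFieldType) (a : nat -> R) w j l : (j <= l)%N ->
  (Gp a w l)`_j = (Gp a w j)`_j.
Proof.
move=> jl; rewrite /Gp !coef_sum.
under eq_bigr do rewrite coefZ.
under [RHS]eq_bigr do rewrite coefZ.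
rewrite (@sum_trunc _ j.+1 l.+1 (fun K : nat => ((-1) ^+ K / w ^+ K.+1) * (Pp a l ^+ K)`_j)) //; last first.
  move=> k hk _; rewrite coef_pow_low ?mulr0 //; by rewrite coefP.
apply: eq_bigr => K _; congr (_ * _); apply: (@coef_pow_eq _ _ _ j) => // k hk.
rewrite !coefP; case: k hk => [|k] //= hk.
have hk2 : (k < j)%N by []. by rewrite hk2 (leq_trans hk2 jl).
Qed.

Lemma csum_rec (R : numFieldType) (a : nat -> R) l : a 0 != 0 ->
  \sum_(j < l.+1) csum a (a 0) j * a (l - j)%N = (l == 0)%:R.
Proof.
move=> w0; set w := a 0.
pose Z := (- w^-1) *: Pp a l.
have hG : Gp a w l = w^-1 *: \sum_(K < l.+1) Z ^+ K.
  rewrite /Gp scaler_sumr; apply: eq_bigr => K _.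
  rewrite /Z exprZn scalerA; congr (_ *: _).
  have -> : - w^-1 = (-1) * w^-1 by rewrite mulN1r.
  rewrite exprMn exprVn exprS invfM; ring.
have hA : w%:P + Pp a l = w *: (1 - Z).
  rewrite scalerBr /Z scalerA mulrN divff // scaleN1r opprK.
  by rewrite -alg_polyC.
have hP : Gp a w l * (w%:P + Pp a l) = 1 - Z ^+ l.+1.
  rewrite hG hA -scalerAl -scalerAr scalerA mulVf // scale1r.
  have e := subrX1 Z l.+1.
  by rewrite -[1 - Z ^+ _]opprB e -mulNr opprB mulrC.
have : (Gp a w l * (w%:P + Pp a l))`_l = (l == 0)%:R.
  rewrite hP coefB coef1 coef_pow_low ?subr0 //.
  by rewrite /Z coefZ coefP mulr0.
rewrite coefM => <-; apply: eq_bigr => j _.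
have hj := ltn_ord j.
rewrite csum_G Gp_stable //; congr (_ * _).
rewrite coefD coefC coefP.
case: (l - j)%N (leq_subr j l) => [|k] hk /=; first by rewrite addr0.
by rewrite hk add0r.
Qed.

Lemma conv_solve (R : numFieldType) (a b c D : nat -> R) n :
  (forall m, (m <= n)%N -> \sum_(j < m.+1) D j * a (m - j)%N = b m) ->
  (forall m, (m <= n)%N -> \sum_(j < m.+1) c j * a (m - j)%N = (m == 0)%:R) ->
  D n = \sum_(l < n.+1) b (n - l)%N * c l.
Proof.
move=> hD hC.
pose Dp := \poly_(i < n.+1) D i; pose Ap := \poly_(i < n.+1) a i.
pose Cp := \poly_(i < n.+1) c i.
have cf (E : nat -> R) m : (m <= n)%N -> (\poly_(i < n.+1) E i)`_m = E m.
  by move=> mn; rewrite coef_poly ltnS mn.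
have hDA m : (m <= n)%N -> (Dp * Ap)`_m = b m.
  move=> mn; rewrite coefM -hD //; apply: eq_bigr => j _.
  have hj : (j <= m)%N := ltn_ord j.
  rewrite (cf D) ?(leq_trans hj mn) // (cf a) // (leq_trans (leq_subr _ _) mn) //.
have hCA m : (m <= n)%N -> (Cp * Ap)`_m = (m == 0)%:R.
  move=> mn; rewrite coefM -hC //; apply: eq_bigr => j _.
  have hj : (j <= m)%N := ltn_ord j.
  rewrite (cf c) ?(leq_trans hj mn) // (cf a) // (leq_trans (leq_subr _ _) mn) //.
have e1 : (Cp * (Dp * Ap))`_n = \sum_(l < n.+1) b (n - l)%N * c l.
  rewrite coefM; apply: eq_bigr => j _.
  have hj : (j <= n)%N := ltn_ord j.
  by rewrite (cf c) // hDA ?leq_subr // mulrC.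
have e2 : (Dp * (Cp * Ap))`_n = D n.
  rewrite coefM big_ord_recr /= subnn (cf D) // hCA // eqxx mulr1 big1 ?add0r //.
  move=> j _; have hj : (j < n)%N := ltn_ord j.
  rewrite hCA ?leq_subr //.
  have -> : ((n - j)%N == 0) = false by rewrite subn_eq0 leqNgt hj.
  by rewrite mulr0.
by rewrite -e2 -e1 mulrCA.
Qed.

Lemma pascal_step (R : numFieldType) (F G : nat -> R) m :
  \sum_(j < m.+1) 'C(m, j)%:R * (F j * G (m - j).+1 + G (m - j)%N * F j.+1) =
  \sum_(j < m.+2) 'C(m.+1, j)%:R * (F j * G (m.+1 - j)%N).
Proof.
rewrite [RHS]big_ord_recl /=.
under [X in _ = _ + X]eq_bigr do rewrite subSS binS natrD mulrDl.
rewrite big_split /= addrA.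
under eq_bigr do rewrite mulrDr.
rewrite big_split /=; congr (_ + _); last first.
  by apply: eq_bigr => j _; rewrite [G _ * _]mulrC.
rewrite big_ord_recl [in RHS]big_ord_recr /= !bin0 !subn0 (bin_small (ltnSn m)) mul0r addr0.
congr (_ + _); apply: eq_bigr => j _.
have hj := ltn_ord j.
rewrite /bump /= add1n subnSK //.
Qed.


Section An.
Variable R : realType.

Lemma near_U (U : set R) (t : R) : open U -> U t -> \forall s \near t, U s.
Proof. by rewrite openE => oU Ut; exact: oU. Qed.

Lemma loc_eq (f g : R -> R) (U : set R) : open U -> (forall t, U t -> f t = g t) ->
  forall k t, U t -> derive1n k f t = derive1n k g t.
Proof.
move=> oU fg; elim=> [|k IH] t Ut; first exact: fg.
rewrite !derive1nS !derive1E; apply: near_eq_derive.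
by move: (near_U oU Ut); apply: filterS => s Us; apply: IH.
Qed.

Lemma leibniz (f g : R -> R) (U : set R) m : open U ->
  (forall k, (k < m)%N -> forall t, U t ->
     derivable (derive1n k f) t 1 /\ derivable (derive1n k g) t 1) ->
  forall t, U t -> derive1n m (fun s => f s * g s) t =
    \sum_(j < m.+1) 'C(m, j)%:R * (derive1n j f t * derive1n (m - j) g t).
Proof.
move=> oU; elim: m => [|m IH] hd t Ut.
  by rewrite big_ord1 /= mul1r.
have hd' : forall k, (k < m)%N -> forall t, U t ->
     derivable (derive1n k f) t 1 /\ derivable (derive1n k g) t 1.
  by move=> k km; apply: hd; exact: ltnW.
pose H := \sum_(j < m.+1) ('C(m, j)%:R *: (derive1n j f * derive1n (m - j) g)).
have HE : forall s, U s -> derive1n m (fun s => f s * g s) s = H s.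
  move=> s Us; rewrite IH // /H fct_sumE; apply: eq_bigr => j _ //.
rewrite derive1nS derive1E (@near_eq_derive _ _ _ _ H); last first.
  by move: (near_U oU Ut); apply: filterS => s Us; apply: HE.
have dF : forall j, (j < m.+1)%N -> derivable (derive1n j f) t 1.
  by move=> j hj; case: (hd j hj t Ut).
have dG : forall j, (j < m.+1)%N -> derivable (derive1n j g) t 1.
  by move=> j hj; case: (hd j hj t Ut).
rewrite /H derive_sum; last first.
  move=> j; apply: derivableZ; apply: derivableM; first exact: dF.
  by apply: dG; rewrite ltnS leq_subr.
rewrite -(pascal_step (fun j => derive1n j f t) (fun j => derive1n j g t)); apply: eq_bigr => j _.
rewrite deriveZ; last first.
  apply: derivableM; first exact: dF.
  by apply: dG; rewrite ltnS leq_subr.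
rewrite deriveM; [|exact: dF|by apply: dG; rewrite ltnS leq_subr].
by rewrite -!derive1E.
Qed.


Lemma q_smooth (u v : R -> R) n :
  (forall k, (k < n)%N -> forall t, derivable (derive1n k u) t 1) ->
  (forall k, (k < n)%N -> forall t, derivable (derive1n k v) t 1) ->
  open (fun t : R => v t != 0 : Prop) ->
  forall k, (k < n)%N -> forall t, v t != 0 ->
    derivable (derive1n k (fun s => u s / v s)) t 1.
Proof.
move=> hu hv oU.
set q := (fun s => u s / v s).
suff : forall k j, (j <= k)%N -> (j < n)%N -> forall t, v t != 0 ->
    derivable (derive1n j q) t 1.
  by move=> H k kn t vt; apply: (H k).
elim=> [|k IH] j.
  rewrite leqn0 => /eqP -> n0 t vt.
  have -> : derive1n 0 q = u * (fun s => (v s)^-1) by [].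
  apply: derivableM; first exact: (hu 0%N n0 t).
  by apply: derivableV => //; exact: (hv 0%N n0 t).
rewrite leq_eqVlt => /orP[/eqP ->|]; last by rewrite ltnS; apply: IH.
move=> kn t vt.
have dq : forall i, (i < k.+1)%N -> forall s, v s != 0 -> derivable (derive1n i q) s 1.
  by move=> i ik s vs; apply: (IH i) => //; apply: ltn_trans kn.
pose E := (derive1n k.+1 u - \sum_(i < k.+1) ('C(k.+1, i)%:R *: (derive1n i q * derive1n (k.+1 - i) v))) * (fun s => (v s)^-1).
have EE : forall s, v s != 0 -> E s = derive1n k.+1 q s.
  move=> s vs.
  have L := @leibniz q v (fun t : R => v t != 0 : Prop) k.+1 oU.
  have L2 := L (fun i ik s vs => conj (dq i ik s vs) (hv i (ltn_trans ik kn) s)) s vs.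
  have L3 : derive1n k.+1 (fun s => q s * v s) s = derive1n k.+1 u s.
    apply: (@loc_eq _ _ (fun t : R => v t != 0 : Prop)) => // r /= vr.
    by rewrite /q divfK.
  rewrite L3 big_ord_recr subnn binn mul1r in L2.
  have -> : E s = (derive1n k.+1 u s - \sum_(i < k.+1) 'C(k.+1, i)%:R *
      (derive1n i q s * derive1n (k.+1 - i) v s)) / v s.
    by rewrite /E /= fct_sumE.
  have hS : \sum_(i < k.+1) 'C(k.+1, widen_ord (leqnSn k.+1) i)%:R *
        (derive1n (widen_ord (leqnSn k.+1) i) q s *
         derive1n (k.+1 - widen_ord (leqnSn k.+1) i) v s) =
     \sum_(i < k.+1) 'C(k.+1, i)%:R * (derive1n i q s * derive1n (k.+1 - i) v s).
    by apply: eq_bigr.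
  have L4 : derive1n k.+1 u s = \sum_(i < k.+1) 'C(k.+1, i)%:R *
      (derive1n i q s * derive1n (k.+1 - i) v s) + derive1n k.+1 q s * v s.
    by rewrite L2 hS.
  by rewrite L4 addrC addKr mulfK.
apply: (@near_eq_derivable _ _ _ E).
  by move: (near_U oU vt); apply: filterS => s vs; apply: EE.
have n0 : (0 < n)%N by apply: leq_ltn_trans kn.
apply: derivableM; last by apply: derivableV => //; exact: (hv 0%N n0 t).
apply: derivableB; first exact: (hu k.+1 kn t).
apply: derivable_sum => i; apply: derivableZ; apply: derivableM.
  by apply: dq.
apply: (hv (k.+1 - i)%N _ t); apply: leq_ltn_trans kn; apply: leq_subr.
Qed.

End An.


Unset Implicit Arguments.
Set Strict Implicit.

Theorem theorem3p1 (R : realType) (n : nat) (u v : R -> R)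
  (hu : forall k, (k < n)%N -> forall t, derivable (derive1n k u) t 1)
  (hv : forall k, (k < n)%N -> forall t, derivable (derive1n k v) t 1)
  (x : R) (hx : v x != 0) :
  derive1n n (fun t => u t / v t) x =
  (n`!)%:R * \sum_(l < n.+1)
     (derive1n (n - l) u x / ((n - l)`!)%:R *
      \sum_(y in partitions_of l)
        (multinom R (\sum_(i < l) (y i : nat))%N (fun i => (y i : nat)) *
         (-1) ^+ (\sum_(i < l) (y i : nat))%N
         / v x ^+ (\sum_(i < l) (y i : nat)).+1 *
         \prod_(i < l) (derive1n i.+1 v x / ((i.+1)`!)%:R) ^+ (y i : nat))).
Proof.
set q := fun t => u t / v t.
have KF : forall m, (m <= n)%N -> derive1n m u x =
    \sum_(j < m.+1) 'C(m, j)%:R * (derive1n j q x * derive1n (m - j) v x).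
  case: n hu hv => [|n'] hu hv m hm.
    move: hm; rewrite leqn0 => /eqP ->.
    by rewrite big_ord1 bin0 mul1r subn0 !derive1n0 /q divfK.
  have cv : forall t, {for t, continuous v}.
    move=> t; apply: differentiable_continuous; apply/derivable1_diffP.
    exact: (hv 0%N _ t).
  have oU : open (fun t : R => v t != 0 : Prop).
    apply: (@open_comp _ _ v (fun y : R => y != 0 : Prop)); last exact: open_neq.
    by move=> t _; apply: cv.
  rewrite -(@loc_eq _ (fun s => q s * v s) u _ oU _ m x hx); last first.
    by move=> r vr; rewrite /q divfK.
  apply: (leibniz oU) => // k km t vt; split.
    apply: (q_smooth hu hv oU) => //; exact: leq_trans km hm.
  by apply: hv; exact: leq_trans km hm.
pose a i := derive1n i v x / (i`!)%:R.
pose b i := derive1n i u x / (i`!)%:R.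
pose D i := derive1n i q x / (i`!)%:R.
pose c := csum a (a 0%N).
have ha0 : a 0%N = v x by rewrite /a fact0 divr1.
have fn0 : forall i, (i`!)%:R != 0 :> R.
  by move=> i; rewrite pnatr_eq0 -lt0n fact_gt0.
have H1 : forall m, (m <= n)%N -> \sum_(j < m.+1) D j * a (m - j)%N = b m.
  move=> m hm; rewrite /b KF // mulr_suml; apply: eq_bigr => j _.
  have hj : (j <= m)%N := ltn_ord j.
  have e := bin_fact hj.
  have cn0 : 'C(m, j)%:R != 0 :> R by rewrite pnatr_eq0 -lt0n bin_gt0.
  rewrite /D /a -e !natrM; field.
  by rewrite cn0 !fn0.
have H2 : forall m, (m <= n)%N -> \sum_(j < m.+1) c j * a (m - j)%N = (m == 0)%:R.
  by move=> m _; apply: csum_rec; rewrite ha0.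
have hD := conv_solve H1 H2.
have -> : derive1n n q x = (n`!)%:R * D n by rewrite /D mulrC divfK.
rewrite hD; congr (_ * _); apply: eq_bigr => l _.
by rewrite /c /csum ha0 /b.
Qed.
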